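(* Let $n\ge3$, let $A_n\le S_n$ be the alternating group and $\iota_n:A_n\hookrightarrow S_n$ the inclusion. Then $$|\mathsf{Desc}^1(\mathsf T^l_{\iota_n},(A_n,m_{A_n}))|=\begin{cases}1,& n=3,\\ k,& n\in\{4k,4k+1\}\ (k\ge1),\\ k+1,& n\in\{4k+2,4k+3\}\ (k\ge1).\end{cases}$$ (Equivalently, this is the number of conjugacy classes of complements to $A_n$ in $S_n$, which are the subgroups $\{1,\sigma\}$ with $\sigma$ a product of an odd number of disjoint transpositions.)
   Context: For a subgroup $B$ of a group $A$ with inclusion $\imath$, $\mathcal Z^1(\mathsf T^l_{\imath},(B,m_B))$ is identified with the set of maps $q:A\to B$ satisfying (ZL1) $q(1)=1$; (ZL2) $q(ba)=b\,q(a)$ for $b\in B,a\in A$; (ZL3) $q(aa')=q(a\,q(a'))$ for $a,a'\in A$ (the algebra structures on the left $B$-set $B$ for the monad $A\otimes_B-$ on left $B$-sets), and $\mathsf{Desc}^1(\mathsf T^l_{\imath},(B,m_B))$ is its quotient by $q\sim q'$ iff there is $b_0\in B$ with $q(a)b_0=q'(ab_0)$ for all $a\in A$. *)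

(* Defs.v *)
From mathcomp Require Import all_boot all_order all_fingroup all_solvable alt.
Set Implicit Arguments. Unset Strict Implicit. Unset Printing Implicit Defensive.
Local Open Scope group_scope.

(* Maps q : A -> B are represented by finite functions gT -> gT that take
   values in B on A and are normalized to 1 outside A (a bijection with the
   set-theoretic maps A -> B). *)
Definition is_map_AB (gT : finGroupType) (A B : {set gT}) (q : {ffun gT -> gT}) :=
  [forall a, if a \in A then q a \in B else q a == 1].

Definition ZL (gT : finGroupType) (A B : {set gT}) (q : {ffun gT -> gT}) : bool :=
  [&& is_map_AB A B q,
      q 1 == 1,
      [forall b in B, forall a in A, q (b * a) == b * q a]
    & [forall a in A, forall a' in A, q (a * a') == q (a * q a')]].

Definition Z1 (gT : finGroupType) (A B : {set gT}) : {set {ffun gT -> gT}} :=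
  [set q | ZL A B q].

Definition desc_rel (gT : finGroupType) (A B : {set gT}) (q q' : {ffun gT -> gT}) : bool :=
  [exists b0 in B, forall a in A, q a * b0 == q' (a * b0)].

Definition Desc1 (gT : finGroupType) (A B : {set gT}) : {set {set {ffun gT -> gT}}} :=
  [set [set q' in Z1 A B | desc_rel A B q q'] | q in Z1 A B].

(* Main.v *)
Require Import Defs.
From mathcomp Require Import all_boot all_order all_fingroup all_solvable alt zify.
Set Implicit Arguments. Unset Strict Implicit. Unset Printing Implicit Defensive.
Local Open Scope group_scope.

Definition supp (T : finType) (s : {perm T}) := [set x | s x != x].

Lemma conj_sym (gT : groupType) (x y : gT) : x ^ y = x -> y ^ x = y.
Proof.
move/conjg_fixP => h; apply/conjg_fixP.
by rewrite -invg_comm (eqP h) invg1.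
Qed.

Lemma comm_of_conj (gT : groupType) (x y : gT) : x ^ y = x -> x * y = y * x.
Proof. by move=> e; rewrite -{2}e conjgE mulKVg. Qed.

Lemma conj_self (gT : groupType) (x : gT) : x ^ x = x.
Proof. by rewrite conjgE mulKg. Qed.

Lemma tperm_fix (T : finType) (p : {perm T}) u v :
  p u = u -> p v = v -> p ^ tperm u v = p.
Proof. by move=> hu hv; apply: conj_sym; rewrite tpermJ hu hv. Qed.

Lemma perm_invol (T : finType) (s : {perm T}) : s * s = 1 -> forall y, s (s y) = y.
Proof. by move=> h y; rewrite -permM h perm1. Qed.

Lemma tperm_comm_inv (T : finType) (s : {perm T}) x :
  s * s = 1 -> tperm x (s x) ^ s = tperm x (s x).
Proof. by move=> h; rewrite tpermJ (perm_invol h) tpermC. Qed.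

Lemma rem_pair (T : finType) (s : {perm T}) x :
  s * s = 1 -> x \in supp s ->
  let t := tperm x (s x) in let s1 := t * s in
  [/\ s1 * s1 = 1, s = t * s1, s1 x = x, s1 (s x) = s x &
      #|supp s1| + 2 = #|supp s|].
Proof.
move=> h hx t s1.
have hinv := perm_invol h.
have ct : t * s = s * t.
  exact: comm_of_conj (tperm_comm_inv x h).
have e1 : forall y, s1 y = s (t y) by move=> y; rewrite permM.
have hxs : x != s x by move: hx; rewrite inE eq_sym.
split.
- by rewrite /s1 -mulgA (mulgA s) -ct -mulgA h /t tpermKg.
- by rewrite /s1 /t tpermKg.
- by rewrite e1 /t tpermL hinv.
- by rewrite e1 /t tpermR.
have -> : supp s = x |: (s x |: supp s1).
  apply/setP=> y; rewrite !inE e1 /t.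
  case: (tpermP x (s x) y) => [->|->|/eqP ny1 /eqP ny2].
  - by rewrite eqxx eq_sym hxs.
  - by rewrite eqxx orbT hinv hxs.
  - by rewrite (negPf ny1) (negPf ny2).
rewrite cardsU1 cardsU1 !inE !e1 /t tpermL tpermR hinv !eqxx /= (negPf hxs) /=.
lia. Qed.

Lemma supp0 (T : finType) (s : {perm T}) : supp s = set0 -> s = 1.
Proof.
move=> h; apply/permP=> y; rewrite perm1; apply/eqP; apply/negPn.
by rewrite -[_ != _](@in_set _ (fun y => s y != y)) -/(supp s) h inE.
Qed.

Lemma invol_parity (T : finType) (s : {perm T}) :
  s * s = 1 -> exists j, #|supp s| = j.*2 /\ odd_perm s = odd j.
Proof.
have [m] := ubnP #|supp s|; elim: m s => // m IH s lt_s h.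
have [e|[x hx]] := set_0Vmem (supp s).
  by exists 0; rewrite e cards0 (supp0 e) odd_perm1.
have [h1 e1 _ _ c1] := rem_pair h hx.
have [|j [hj oj]] := IH _ _ h1; first by move: lt_s; rewrite -c1; lia.
exists j.+1; split; first by rewrite -c1 hj; lia.
have hxs : x != s x by move: hx; rewrite inE eq_sym.
by rewrite {1}e1 odd_mul_tperm hxs oj.
Qed.

Lemma supp_conj (T : finType) (s c : {perm T}) : #|supp (s ^ c)| = #|supp s|.
Proof.
suff -> : supp (s ^ c) = c @: supp s by rewrite card_imset //; apply: perm_inj.
apply/setP=> y.
rewrite [y \in supp _]inE; apply/idP/imsetP => [hy|[z hz ->]]; last first.
  by rewrite permJ (inj_eq perm_inj); move: hz; rewrite inE.
exists (c^-1 y); last by rewrite permKV.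
by rewrite inE -(inj_eq (@perm_inj _ c)) -permJ !permKV.
Qed.

Lemma invol_conj (T : finType) (s s' : {perm T}) :
  s * s = 1 -> s' * s' = 1 -> #|supp s| = #|supp s'| -> exists c, s' = s ^ c.
Proof.
have [m] := ubnP #|supp s|; elim: m s s' => // m IH s s' lt_s h h' ec.
have [e|[x hx]] := set_0Vmem (supp s).
  have e' : supp s' = set0 by apply/eqP; rewrite -cards_eq0 -ec e cards0.
  by exists 1; rewrite (supp0 e) (supp0 e') conjg1.
have [x' hx'] : exists x', x' \in supp s'.
  by apply/set0Pn; rewrite -card_gt0 -ec card_gt0; apply/set0Pn; exists x.
have [h1 e1 f1 f2 c1] := rem_pair h hx.
have [h1' e1' f1' f2' c1'] := rem_pair h' hx'.
set s1 := tperm x (s x) * s in h1 e1 f1 f2 c1.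
set s1' := tperm x' (s' x') * s' in h1' e1' f1' f2' c1'.
have [d1 cc] : exists c, s1' = s1 ^ c.
  apply: (IH _ _ _ h1 h1'); first by move: lt_s; rewrite -c1; lia.
  by move: ec; rewrite -c1 -c1'; lia.
set a := d1 x; set b := d1 (s x); set a' := x'; set b' := s' x'.
have fa : (s1 ^ d1) a = a by rewrite permJ f1.
have fb : (s1 ^ d1) b = b by rewrite permJ f2.
rewrite -cc in fa fb.
set b1 := tperm a a' b.
have fb1 : s1' b1 = b1 by rewrite /b1; case: tpermP => _.
have hab : a != b.
  by rewrite (inj_eq perm_inj); move: hx; rewrite inE eq_sym.
have ha'b1 : a' != b1.
  apply/eqP=> e; move: hab; rewrite /b1 in e.
  by rewrite -[b](tpermK a a') -e tpermR eqxx.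
have ha'b' : a' != b' by move: hx'; rewrite inE eq_sym.
exists (d1 * (tperm a a' * tperm b1 b')).
rewrite conjgM {1}e1 (conjMg (tperm x (s x)) s1 d1) -cc tpermJ -/a -/b conjMg (conjgM s1') (tperm_fix fa f1').
rewrite (tperm_fix fb1 f2') tpermJ.
have n1 : b1 != a' by rewrite eq_sym.
have n2 : b' != a' by rewrite eq_sym.
rewrite !permM (tpermL a a') -/b1 (tpermD n1 n2) tpermL.
by rewrite e1'.
Qed.

Lemma invol_exists (T : finType) j : j.*2 <= #|T| ->
  exists s : {perm T}, s * s = 1 /\ #|supp s| = j.*2.
Proof.
elim: j => [|j IH] hj; first by exists 1; split; [rewrite mulg1|apply/eqP; rewrite cards_eq0; apply/eqP/setP=> y; rewrite !inE perm1 eqxx].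
have [|s [hs cs]] := IH; first by move: hj; rewrite doubleS; lia.
have : 1 < #|~: supp s| by have := cardsC (supp s); rewrite cs; move: hj; rewrite doubleS; lia.
move/card_gt1P=> [x [y [hx hy hxy]]].
move: hx hy; rewrite !inE !negbK => /eqP hx /eqP hy.
have ct : tperm x y * s = s * tperm x y.
  by apply: comm_of_conj; rewrite tpermJ hx hy.
exists (tperm x y * s); split.
  by rewrite -mulgA (mulgA s) -ct -mulgA hs tpermKg.
have -> : supp (tperm x y * s) = x |: (y |: supp s).
  apply/setP=> z; rewrite !inE permM.
  case: (tpermP x y z) => [->|->|/eqP n1 /eqP n2].
  - by rewrite hy eqxx eq_sym hxy.
  - by rewrite hx eqxx orbT hxy.
  - by rewrite (negPf n1) (negPf n2).
rewrite cardsU1 cardsU1 !inE hx hy !eqxx /= (negPf hxy) cs doubleS /=; lia.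
Qed.

Definition sig (T : finType) (tau : {perm T}) (q : {ffun {perm T} -> {perm T}}) := tau * q tau.

Definition qof (T : finType) (s : {perm T}) : {ffun {perm T} -> {perm T}} :=
  [ffun a => if odd_perm a then a * s else a].

Lemma memSym (T : finType) (a : {perm T}) : a \in 'Sym_T.
Proof. by rewrite /Sym inE. Qed.

Lemma Z1_char (T : finType) (tau : {perm T}) q :
  tau * tau = 1 -> odd_perm tau -> q \in Z1 ('Sym_T) ('Alt_T) ->
  [/\ sig tau q * sig tau q = 1, odd_perm (sig tau q),
      (forall a, ~~ odd_perm a -> q a = a) &
      (forall a, odd_perm a -> q a = a * sig tau q)].
Proof.
move=> htt ht; rewrite inE /ZL => /and4P [hm /eqP q1 /forall_inP h2 /forall_inP h3].
have hB a : q a \in 'Alt_T by move/forallP: hm => /(_ a); rewrite memSym.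
have ev a : ~~ odd_perm a -> q a = a.
  move=> ha; have hA : a \in 'Alt_T by rewrite Alt_even.
  have /forall_inP/(_ 1 (memSym _))/eqP := h2 a hA.
  by rewrite mulg1 q1 mulg1.
have od a : odd_perm a -> q a = a * sig tau q.
  move=> ha; have hb : a * tau \in 'Alt_T by rewrite Alt_even odd_permM ha ht.
  have /forall_inP/(_ tau (memSym _))/eqP := h2 _ hb.
  by rewrite -mulgA htt mulg1 -mulgA.
have osig : odd_perm (sig tau q).
  by rewrite /sig odd_permM ht; move: (hB tau); rewrite Alt_even => /negPf ->.
split => //.
have /forall_inP/(_ tau (memSym _))/eqP := h3 tau (memSym _).
by rewrite htt q1 -/(sig tau q) od.
Qed.

Lemma qof_Z1 (T : finType) (s : {perm T}) :
  s * s = 1 -> odd_perm s -> qof s \in Z1 ('Sym_T) ('Alt_T).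
Proof.
move=> hss hs; rewrite inE /ZL; apply/and4P; split.
- apply/forallP=> a; rewrite memSym ffunE Alt_even.
  by case: ifP => h; rewrite ?odd_permM ?h ?hs.
- by rewrite ffunE odd_perm1.
- apply/forall_inP=> b; rewrite Alt_even => hb; apply/forall_inP=> a _.
  by rewrite !ffunE odd_permM (negPf hb) /=; case: ifP; rewrite ?mulgA.
- apply/forall_inP=> a _; apply/forall_inP=> a' _.
  rewrite !ffunE; case: (boolP (odd_perm a')) => ha'.
    rewrite !odd_permM ha' hs /=; case: (boolP (odd_perm a)) => ha /=.
      by rewrite !mulgA -(mulgA _ s) hss mulg1.
    by rewrite mulgA.
  by [].
Qed.

Lemma sig_qof (T : finType) (tau s : {perm T}) :
  tau * tau = 1 -> odd_perm tau -> sig tau (qof s) = s.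
Proof. by move=> htt ht; rewrite /sig ffunE ht mulgA htt mul1g. Qed.

Lemma desc_char (T : finType) (tau : {perm T}) q q' :
  tau * tau = 1 -> odd_perm tau ->
  q \in Z1 ('Sym_T) ('Alt_T) -> q' \in Z1 ('Sym_T) ('Alt_T) ->
  desc_rel ('Sym_T) ('Alt_T) q q' = (#|supp (sig tau q)| == #|supp (sig tau q')|).
Proof.
move=> htt ht hq hq'.
have [i1 o1 e1 d1] := Z1_char htt ht hq.
have [i2 o2 e2 d2] := Z1_char htt ht hq'.
set s := sig tau q in i1 o1 e1 d1 *; set s' := sig tau q' in i2 o2 e2 d2 *.
clearbody s s'.
apply/idP/idP.
  case/exists_inP => b0; rewrite Alt_even => hb0 /forall_inP/(_ tau (memSym _))/eqP.
  rewrite d1 // d2; last by rewrite odd_permM ht (negPf hb0).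
  rewrite -!mulgA => /mulgI e.
  have -> : s' = s ^ b0 by rewrite conjgE e mulKg.
  by rewrite supp_conj.
move/eqP=> ec; have [c hc] := invol_conj i1 i2 ec.
pose b0 := if odd_perm c then s * c else c.
have hb0 : ~~ odd_perm b0 by rewrite /b0; case: ifP => h; rewrite ?odd_permM ?o1 ?h.
have hc0 : s' = s ^ b0 by rewrite /b0; case: ifP => _ //; rewrite conjgM conj_self.
apply/exists_inP; exists b0; first by rewrite Alt_even.
apply/forall_inP=> a _; apply/eqP.
case: (boolP (odd_perm a)) => ha.
  rewrite d1 // d2; last by rewrite odd_permM ha (negPf hb0).
  by rewrite hc0 conjgE -(mulgA a b0) mulKVg mulgA.
by rewrite e1 // e2 // odd_permM (negPf ha) (negPf hb0).
Qed.

Lemma count_classes (X Y : finType) (Z : {set X}) (R : X -> X -> bool) (f : X -> Y) :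
  {in Z &, forall q q', R q q' = (f q == f q')} ->
  #|[set [set q' in Z | R q q'] | q in Z]| = #|f @: Z|.
Proof.
move=> hR.
have -> : [set [set q' in Z | R q q'] | q in Z] = [set [set q' in Z | f q' == y] | y in f @: Z].
  rewrite -imset_comp; apply: eq_in_imset => q hq /=; apply/setP=> q'; rewrite !inE.
  by case hq': (q' \in Z) => //=; rewrite hR // eq_sym.
rewrite card_in_imset // => y1 y2 /imsetP[q1 h1 ->] /imsetP[q2 h2 ->] e.
have : q1 \in [set q' in Z | f q' == f q1] by rewrite inE h1 eqxx.
by rewrite e inE => /andP[_ /eqP].
Qed.

Lemma count4 m : #|[set i : 'I_m.+1 | i %% 4 == 2]| = (m + 2) %/ 4.
Proof.
rewrite -sum1_card big_mkcond /=.
have -> : \sum_(i < m.+1) (if i \in [set i : 'I_m.+1 | i %% 4 == 2] then 1 else 0)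
   = \sum_(0 <= i < m.+1) (i %% 4 == 2 : nat).
  by rewrite big_mkord; apply: eq_bigr => i _; rewrite inE; case: ifP.
elim: m => [|m IH]; first by rewrite big_nat1.
rewrite big_nat_recr //= IH; case: eqP => h /=; lia.
Qed.

Local Close Scope group_scope.

Theorem mainTheorem18 (n : nat) (hn : 3 <= n) :
  let D := #|Desc1 ('Sym_('I_n))%g ('Alt_('I_n))%g| in
  [/\ n = 3 -> D = 1,
      forall k, 1 <= k -> (n = 4 * k \/ n = 4 * k + 1) -> D = k
    & forall k, 1 <= k -> (n = 4 * k + 2 \/ n = 4 * k + 3) -> D = k + 1].
Proof.
move=> D.
suff hD : D = (n + 2) %/ 4.
  rewrite hD; split => [->//|k hk [->|->]|k hk [->|->]]; lia.
rewrite /D /Desc1.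
have h0 : 0 < n by lia.
have h1 : 1 < n by lia.
pose tau : {perm 'I_n} := tperm (Ordinal h0) (Ordinal h1).
have htt : (tau * tau = 1)%g by rewrite -{2}[tau]mulg1 /tau tpermKg.
have ht : odd_perm tau by rewrite odd_tperm.
have bnd : forall s : {perm 'I_n}, #|supp s| < n.+1.
  by move=> s; rewrite ltnS; apply: leq_trans (max_card _) _; rewrite card_ord.
rewrite (@count_classes _ _ _ _ (fun q => inord #|supp (sig tau q)| : 'I_n.+1)); last first.
  move=> q q' hq hq'; rewrite (desc_char htt ht hq hq').
  apply/eqP/eqP => [->//|/(congr1 val)]; rewrite /= !inordK //.
rewrite -count4; apply: eq_card => i; rewrite [in RHS]inE; apply/imsetP/idP.
  move=> [q hq ->].
  have [i1 o1 _ _] := Z1_char htt ht hq.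
  have [j [hj oj]] := invol_parity i1.
  rewrite inordK // hj; have := odd_double_half j; rewrite -oj o1 /=; lia.
move=> hi.
have hi2 := modn2 i; have hih := odd_double_half i.
set j := i./2 in hih.
clearbody j; move/eqP: hi => hi; have hin := ltn_ord i.
have oj : odd j.
  have := modn2 j; case: (odd j) => //= ?; lia.
have hjn : j.*2 <= #|'I_n| by rewrite card_ord; have := ltn_ord i; lia.
have [s [hs cs]] := invol_exists hjn.
have [j' [hj' oj']] := invol_parity hs.
have ejj : j' = j by move: hj'; rewrite cs; lia.
have os : odd_perm s by rewrite oj' ejj.
exists (qof s); first exact: qof_Z1 hs os.
rewrite sig_qof // cs; apply/val_inj; rewrite /= inordK; lia.
Qed.
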